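(* Let $L$ be a finite-dimensional pure, nonnilpotent, solvable Lie algebra over $\mathbb{C}$ of breadth $2$ such that $\dim[L,L]=2$ and $\dim L^k=1$ for all integers $k\geq 2$. Then for some positive integer $n$, $L$ has a basis $\{x_1,x_2,z_1,z_2,\ldots,z_n,z\}$ such that one of the following holds: (1) $n$ is even and the only nonzero brackets of basis elements (up to antisymmetry) are $[x_1,x_2]=x_1$ and $[z_i,z_{i+1}]=z$ for all $i=1,3,5,\ldots,n-1$; or (2) $n$ is odd and the only nonzero brackets of basis elements (up to antisymmetry) are $[x_1,x_2]=x_1$, $[x_2,z_1]=z$ and $[z_i,z_{i+1}]=z$ for all $i=2,4,6,\ldots,n-1$.
   Context: For $x\in L$, the breadth of $x$ is $b(x)=\mathrm{rank}(\mathrm{ad}_x)$, and $b(L)=\max\{b(x)\mid x\in L\}$. $L$ is pure if it has no abelian ideal as a direct summand; equivalently $Z(L)\subseteq[L,L]$, where $Z(L)$ is the center. The lower central series is indexed by $L^0=L$, $L^1=[L,L]$ and $L^k=[L,L^{k-1}]$ for $k\geq 2$. *)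

(* Defs.v *)
From HB Require Import structures.
From mathcomp Require Import all_boot all_order all_algebra all_field.
From mathcomp Require Import complex.
From mathcomp Require Import reals.
Set Implicit Arguments. Unset Strict Implicit. Unset Printing Implicit Defensive.
Import Order.TTheory GRing.Theory Num.Theory.
Local Open Scope ring_scope.


Definition is_lie_bracket (K : fieldType) (V : vectType K) (br : V -> V -> V) : Prop :=
  [/\ (forall (a : K) (x y z : V), br (a *: x + y) z = a *: br x z + br y z),
      (forall (a : K) (x y z : V), br z (a *: x + y) = a *: br z x + br z y),
      (forall x : V, br x x = 0) &
      (forall x y z : V, br x (br y z) + br y (br z x) + br z (br x y) = 0)].

Section LieDefs.
Variables (K : fieldType) (V : vectType K) (br : V -> V -> V).

Definition lbr (A B : {vspace V}) : {vspace V} :=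
  <<[seq br a b | a <- vbasis A, b <- vbasis B]>>%VS.

(* lower central series: L^0 = L, L^1 = [L,L], L^k = [L, L^(k-1)] *)
Fixpoint lcs (k : nat) : {vspace V} :=
  match k with 0 => fullv | k'.+1 => lbr fullv (lcs k') end.

Fixpoint dser (k : nat) : {vspace V} :=
  match k with 0 => fullv | k'.+1 => lbr (dser k') (dser k') end.

Definition lie_solvable : Prop := exists k, dser k = 0%VS.
Definition lie_nilpotent : Prop := exists k, lcs k = 0%VS.

Definition lie_ideal (I : {vspace V}) : Prop :=
  forall x y, y \in I -> br x y \in I.
Definition lie_abelian (I : {vspace V}) : Prop :=
  forall x y, x \in I -> y \in I -> br x y = 0.

Definition lie_pure : Prop :=
  forall I J : {vspace V}, lie_ideal I -> lie_ideal J -> lie_abelian I ->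
    directv (I + J)%VS -> (I + J)%VS = fullv -> I = 0%VS.

Definition breadth (x : V) : nat := (\dim (limg (linfun (br x))))%VS.
Definition lie_breadth_eq (n : nat) : Prop :=
  (exists x, breadth x = n) /\ (forall x, breadth x <= n)%N.

End LieDefs.

(* Main.v *)
Require Import Defs.
From HB Require Import structures.
From mathcomp Require Import all_boot all_order all_algebra all_field.
From mathcomp Require Import complex.
From mathcomp Require Import reals.
From Stdlib Require Import Classical.
Import Order.TTheory GRing.Theory Num.Theory.
Local Open Scope ring_scope.
Set Implicit Arguments. Unset Strict Implicit. Unset Printing Implicit Defensive.

Section Lie.
Variables (F : fieldType) (V : vectType F) (br : V -> V -> V).
Hypothesis Hbr : is_lie_bracket br.

Definition adl (y : V) := fun x => br y x.
Definition adr (y : V) := fun x => br x y.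
Lemma adl_lin y : linear (adl y).
Proof. by case: Hbr => _ H _ _ a u v; rewrite /adl H. Qed.
Lemma adr_lin y : linear (adr y).
Proof. by case: Hbr => H _ _ _ a u v; rewrite /adr H. Qed.
HB.instance Definition _ y := GRing.isLinear.Build F V V *:%R (adl y) (adl_lin y).
HB.instance Definition _ y := GRing.isLinear.Build F V V *:%R (adr y) (adr_lin y).
Definition adL y : 'End(V) := linfun (adl y).
Definition adR y : 'End(V) := linfun (adr y).
Lemma adLE y x : adL y x = br y x. Proof. by rewrite lfunE. Qed.
Lemma adRE y x : adR y x = br x y. Proof. by rewrite lfunE. Qed.

Lemma br0l y : br 0 y = 0. Proof. exact: (linear0 (adr y)). Qed.
Lemma br0r y : br y 0 = 0. Proof. exact: (linear0 (adl y)). Qed.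
Lemma brDl x y w : br (x + y) w = br x w + br y w. Proof. exact: (linearD (adr w)). Qed.
Lemma brDr x y w : br w (x + y) = br w x + br w y. Proof. exact: (linearD (adl w)). Qed.
Lemma brZl a x w : br (a *: x) w = a *: br x w.
Proof. by rewrite -[a *: x]addr0; case: Hbr => H _ _ _; rewrite H br0l addr0. Qed.
Lemma brZr a x w : br w (a *: x) = a *: br w x.
Proof. by rewrite -[a *: x]addr0; case: Hbr => _ H _ _; rewrite H br0r addr0. Qed.
Lemma brNl x w : br (- x) w = - br x w. Proof. exact: (linearN (adr w)). Qed.
Lemma brNr x w : br w (- x) = - br w x. Proof. exact: (linearN (adl w)). Qed.
Lemma brBl x y w : br (x - y) w = br x w - br y w. Proof. exact: (linearB (adr w)). Qed.
Lemma brBr x y w : br w (x - y) = br w x - br w y. Proof. exact: (linearB (adl w)). Qed.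
Lemma brxx x : br x x = 0. Proof. by case: Hbr. Qed.
Lemma brC x y : br y x = - br x y.
Proof.
have := brxx (x + y); rewrite brDl !brDr !brxx add0r addr0 => /eqP.
by rewrite addr_eq0 => /eqP ->; rewrite opprK.
Qed.
Lemma jacobi x y w : br x (br y w) + br y (br w x) + br w (br x y) = 0.
Proof. by case: Hbr. Qed.

Lemma br_spanl (X : seq V) (C : {vspace V}) b :
  (forall x, x \in X -> br x b \in C) -> forall a, a \in <<X>>%VS -> br a b \in C.
Proof.
move=> H a Ha.
have: (<<X>> <= adR b @^-1: C)%VS.
  by apply/span_subvP => x Hx; rewrite -memv_preim adRE H.
by move/subvP/(_ a Ha); rewrite -memv_preim adRE.
Qed.

Lemma br_span (X Y : seq V) (C : {vspace V}) :
  (forall x y, x \in X -> y \in Y -> br x y \in C) ->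
  forall a b, a \in <<X>>%VS -> b \in <<Y>>%VS -> br a b \in C.
Proof.
move=> H a b Ha Hb; apply: br_spanl Ha => x Hx.
rewrite brC memvN; apply: br_spanl Hb => y Hy.
by rewrite brC memvN H.
Qed.

Lemma mem_lbr (A B : {vspace V}) a b : a \in A -> b \in B -> br a b \in lbr br A B.
Proof.
move=> Ha Hb; apply: (@br_span (vbasis A) (vbasis B)).
- by move=> x y Hx Hy; apply: memv_span; apply: allpairs_f.
- by rewrite (span_basis (vbasisP A)).
- by rewrite (span_basis (vbasisP B)).
Qed.

Lemma lbr_sub (A B C : {vspace V}) :
  (forall a b, a \in A -> b \in B -> br a b \in C) -> (lbr br A B <= C)%VS.
Proof.
move=> H; apply/span_subvP => w /allpairsP [[x y] [/= Hx Hy ->]].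
by apply: H; apply: vbasis_mem.
Qed.

Lemma subv_witness (U W : {vspace V}) : ~~ (U <= W)%VS -> exists2 x, x \in U & x \notin W.
Proof.
move=> H.
have: ~~ all (fun x => x \in W) (vbasis U).
  apply: contra H => /allP Hall.
  by rewrite -(span_basis (vbasisP U)); apply/span_subvP => x /Hall.
by case/allPn => x Hx Hn; exists x => //; apply: vbasis_mem.
Qed.


Lemma structure : lie_pure br -> \dim (lcs br 1) = 2%N -> \dim (lcs br 2) = 1%N ->
  \dim (lcs br 3) = 1%N ->
  exists u x2 z, [/\ u != 0, z \notin <[u]>%VS, br u x2 = u, (forall y, br y z = 0) &
   [/\ (forall a b, br a b \in (<[u]> + <[z]>)%VS), (forall v, exists al, br v u = al *: u),
       (forall c, (forall y, br c y = 0) -> c \in (<[u]> + <[z]>)%VS) & z \in lcs br 1]].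
Proof.
move=> Hpure H1 H2 H3.
have G1 a b : br a b \in lcs br 1 by apply: mem_lbr; rewrite memvf.
have G2 k a b : b \in lcs br k -> br a b \in lcs br k.+1.
  by move=> Hb; exact: (mem_lbr (memvf a) Hb).
have S21 : (lcs br 2 <= lcs br 1)%VS by apply: lbr_sub => a b _ _; apply: G1.
have S32 : (lcs br 3 <= lcs br 2)%VS.
  by apply: lbr_sub => a b _ Hb; apply: G2; apply: (subvP S21).
have E32 : lcs br 3 = lcs br 2 by apply/eqP; rewrite eqEdim S32 H2 H3.
set u := vpick (lcs br 2).
have Hu : u != 0 by rewrite vpick0 -dimv_eq0 H2.
have Hu2 : u \in lcs br 2 := memv_pick _.
have E2 : lcs br 2 = <[u]>%VS.
  by apply/eqP; rewrite eq_sym eqEdim dim_vline Hu H2 andbT -memvE.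
have S3 v : exists al, br v u = al *: u.
  by apply/vlineP; rewrite -E2 -E32; apply: G2; exact: Hu2.
have Hu1 : u \in lcs br 1 := subvP S21 _ Hu2.
have [w Hw1 Hwu] : exists2 w, w \in lcs br 1 & w \notin <[u]>%VS.
  apply: subv_witness; apply/negP => Hs.
  by have := dimvS Hs; rewrite H1 dim_vline Hu.
have E1 : lcs br 1 = <<[:: w; u]>>%VS.
  apply/eqP; rewrite eq_sym eqEdim H1.
  have Hfree : free [:: w; u] by rewrite free_cons span_seq1 Hwu seq1_free Hu.
  rewrite (eqP Hfree) andbT.
  by apply/span_subvP => x; rewrite !inE => /orP [/eqP->|/eqP->].
have memL v : v \in lcs br 1 -> exists a b, v = a *: w + b *: u.
  rewrite E1 span_cons span_seq1 => /memv_addP [v1 /vlineP [a ->] [v2 /vlineP [b ->] ->]].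
  by exists a, b.
have Hwu0 : br w u = 0.
  have: (lcs br 1 <= lker (adR u))%VS.
    apply: lbr_sub => a b _ _; rewrite memv_ker adRE.
    have [ka Ha] := S3 a; have [kb Hb] := S3 b.
    have J := jacobi a b u.
    rewrite Hb brZr Ha [br u a]brC Ha brNr brZr Hb !scalerA mulrC addrN add0r in J.
    by rewrite brC J oppr0.
  by move/subvP/(_ w Hw1); rewrite memv_ker adRE => /eqP.
have [x0 Hx0] : exists x0, br x0 u != 0.
  apply: NNPP => Hn.
  have Hall x : br x u = 0 by apply: NNPP => Hx; apply: Hn; exists x; apply/eqP.
  have: (lcs br 3 <= 0)%VS.
    apply: lbr_sub => a b _ Hb; have : b \in lcs br 2 := Hb.
    by rewrite E2 => /vlineP [k ->]; rewrite brZr Hall scaler0 mem0v.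
  by rewrite E32 E2 subv0 -dimv_eq0 dim_vline Hu.
have [a0 Ha0] := S3 x0.
have a0n : a0 != 0 by apply: contra Hx0 => /eqP a00; rewrite Ha0 a00 scale0r.
set x2 := (- a0^-1) *: x0.
have Hx2u : br x2 u = - u by rewrite /x2 brZl Ha0 scalerA mulNr mulVf // scaleN1r.
have Hux2 : br u x2 = u by rewrite brC Hx2u opprK.
have [b2 Hb2] : exists b2, br x2 w = b2 *: u by apply/vlineP; rewrite -E2; apply: G2.
set z := w + b2 *: u.
have Hzu : z \notin <[u]>%VS.
  apply: contra Hwu => Hz; have -> : w = z - b2 *: u by rewrite /z addrK.
  by rewrite memvB // memvZ // memv_line.
have Hzc y : br y z = 0.
  have [al Hal] := S3 y.
  have [be Hbe] : exists be, br y w = be *: u by apply/vlineP; rewrite -E2; apply: G2.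
  have J := jacobi y x2 w.
  have J2 : br w (br y x2) = 0.
    have [c [d ->]] := memL _ (G1 y x2).
    by rewrite brDr !brZr brxx Hwu0 !scaler0 addr0.
  rewrite J2 addr0 Hb2 brZr Hal [br w y]brC Hbe brNr brZr Hx2u scalerN opprK in J.
  by rewrite /z brDr brZr Hal Hbe addrC.
have Huin : u \in (<[u]> + <[z]>)%VS by apply: (subvP (addvSl _ _)); apply: memv_line.
have Hzin : z \in (<[u]> + <[z]>)%VS by apply: (subvP (addvSr _ _)); apply: memv_line.
have Hwin : w \in (<[u]> + <[z]>)%VS.
  have -> : w = z - b2 *: u by rewrite /z addrK.
  by rewrite memvB // memvZ.
have memL2 v : v \in lcs br 1 -> v \in (<[u]> + <[z]>)%VS.
  by move/memL => [a [b ->]]; rewrite memvD // memvZ.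
have S4 c : (forall y, br c y = 0) -> c \in (<[u]> + <[z]>)%VS.
  move=> Hc; apply: memL2.
  case: (boolP (c \in lcs br 1)) => // Hn; exfalso.
  set U := (<[c]> + lcs br 1)%VS.
  set J := (lcs br 1 + U^C)%VS.
  have UE : U = (<[c]> + lcs br 1)%VS by [].
  have JE : J = (lcs br 1 + U^C)%VS by [].
  clearbody J U.
  have HI : lie_ideal br <[c]>%VS.
    by move=> x y /vlineP [k ->]; rewrite brZr brC Hc oppr0 scaler0 mem0v.
  have HJ : lie_ideal br J by move=> x y _; rewrite JE; apply: (subvP (addvSl _ _)); apply: G1.
  have HA : lie_abelian br <[c]>%VS by move=> x y /vlineP [k ->] _; rewrite brZl Hc scaler0.
  have HD : directv (<[c]> + J).
    apply/directv_addP; apply/eqP; rewrite -subv0; apply/subvP => v /memv_capP.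
    rewrite JE; case=> /vlineP [k ->] /memv_addP [l Hl [m Hm Heq]].
    have Hm0 : m = 0.
      have : m \in (U :&: U^C)%VS.
        rewrite memv_cap Hm andbT.
        have -> : m = k *: c - l by rewrite Heq addrC addKr.
        rewrite UE memvB //; first by apply: (subvP (addvSl _ _)); rewrite memvZ // memv_line.
        by apply: (subvP (addvSr _ _)).
      by rewrite capv_compl memv0 => /eqP.
    rewrite Hm0 addr0 in Heq.
    have [-> | kn] := eqVneq k 0; first by rewrite scale0r mem0v.
    have Hcl : c = k^-1 *: l by rewrite -Heq scalerA mulVf // scale1r.
    by move: Hn; rewrite Hcl (memvZ _ Hl).
  have HF : (<[c]> + J)%VS = fullv by rewrite JE addvA -UE addv_complf.
  have H0 := Hpure _ _ HI HJ HA HD HF.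
  by move: (memv_line c); rewrite H0 memv0 => /eqP Hc0; rewrite Hc0 mem0v in Hn.
have S5 : z \in lcs br 1 by rewrite /z memvD // memvZ.
exists u, x2, z; split => //; split => // a b; exact: memL2.
Qed.

Section Darboux.
Variable z : V.
Hypothesis Hz0 : z != 0.
Hypothesis Hzc : forall y, br y z = 0.

Definition pat (i j : nat) : V :=
  if ~~ odd i && (j == i.+1) then z else if ~~ odd j && (i == j.+1) then - z else 0.

Lemma darboux d : forall (P : {vspace V}) (x : V),
  (\dim P <= d)%N -> z \in P ->
  (forall a b, a \in P -> b \in P -> br a b \in <[z]>%VS) ->
  (forall r, r \in P -> (forall b, b \in P -> br r b = 0) -> r \in <[z]>%VS) ->
  (forall b, b \in P -> br x b \in <[z]>%VS) ->
  exists s x', [/\ x' - x \in P, all (fun v => v \in P) s && ~~ odd (size s),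
     (forall j, (j < size s)%N -> br x' (nth 0 s j) = 0),
     (forall i j, (i < size s)%N -> (j < size s)%N -> br (nth 0 s i) (nth 0 s j) = pat i j)
   & (free (s ++ [:: z]) && (P <= <<s ++ [:: z]>>)%VS)].
Proof.
elim: d => [|d IH] P x HdP HzP HPP Hnd Hx.
  exfalso; move: HdP; rewrite leqn0 dimv_eq0 => /eqP HP0.
  by move: HzP; rewrite HP0 memv0 (negbTE Hz0).
case: (boolP (P <= <[z]>)%VS) => HPz.
  exists [::], x; split => //=.
  - by rewrite subrr mem0v.
  - by rewrite /= seq1_free Hz0 span_seq1.
have [e He Hez] := subv_witness HPz.
have [f0 Hf0 Hef0] : exists2 f0, f0 \in P & br e f0 != 0.
  apply: NNPP => Hn; case/negP: Hez; apply: Hnd => // b Hb.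
  by apply: NNPP => Hb0; apply: Hn; exists b => //; apply/eqP.
have [k Hk] := vlineP _ _ (HPP _ _ He Hf0).
have kn : k != 0 by apply: contra Hef0 => /eqP k0; rewrite Hk k0 scale0r.
set f := k^-1 *: f0.
have Hf : f \in P by rewrite memvZ.
have Hef : br e f = z by rewrite /f brZr Hk scalerA mulVf // scale1r.
have Hfe : br f e = - z by rewrite brC Hef.
clearbody f.
set P' := (P :&: lker (adL e) :&: lker (adL f))%VS.
have memP' v : (v \in P') = [&& v \in P, br e v == 0 & br f v == 0].
  by rewrite !memv_cap !memv_ker !adLE andbA.
have P'P : (P' <= P)%VS by apply/subvP => v; rewrite memP' => /and3P [].
have proj y : br y e \in <[z]>%VS -> br y f \in <[z]>%VS ->
    exists kk mm, br (y - mm *: e + kk *: f) e = 0 /\ br (y - mm *: e + kk *: f) f = 0.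
  move=> /vlineP [kk Hkk] /vlineP [mm Hmm]; exists kk, mm; split.
  - by rewrite brDl brBl !brZl Hkk brxx Hfe scaler0 subr0 scalerN addrN.
  - by rewrite brDl brBl !brZl Hmm Hef brxx scaler0 addr0 subrr.
have projP b : b \in P -> exists kk mm, b - mm *: e + kk *: f \in P'.
  move=> Hb; have [kk [mm [H1 H2]]] := proj b (HPP _ _ Hb He) (HPP _ _ Hb Hf).
  exists kk, mm; rewrite memP' [br e _]brC [br f _]brC H1 H2 oppr0 eqxx !andbT.
  by apply: memvD; [apply: memvB|]; rewrite // memvZ.
have HeP' : e \notin P' by rewrite memP' Hfe oppr_eq0 (negbTE Hz0) !andbF.
have HdP' : (\dim P' <= d)%N.
  have H1 := dimvS P'P.
  have Hne : \dim P' != \dim P.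
    apply: contra HeP' => /eqP Heq.
    have : P' == P by rewrite eqEdim P'P Heq leqnn.
    by move/eqP ->.
  by rewrite -ltnS; apply: leq_trans HdP; rewrite ltn_neqAle Hne H1.
have [kx [mx [Hx1 Hx2]]] := proj x (Hx _ He) (Hx _ Hf).
set x1 := x - mx *: e + kx *: f.
have A1 : z \in P' by rewrite memP' HzP !Hzc eqxx.
have A2 : forall a b, a \in P' -> b \in P' -> br a b \in <[z]>%VS.
  by move=> a b Ha Hb; apply: HPP; apply: (subvP P'P).
have A3 : forall r, r \in P' -> (forall b, b \in P' -> br r b = 0) -> r \in <[z]>%VS.
  move=> r Hr Hr0; apply: Hnd; first exact: (subvP P'P).
  move=> b Hb; have [kk [mm Hpb]] := projP b Hb.
  have -> : b = (b - mm *: e + kk *: f) - kk *: f + mm *: e by rewrite addrK subrK.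
  move: (Hr); rewrite memP' => /and3P [_ /eqP Her /eqP Hfr].
  by rewrite brDr brBr !brZr Hr0 // [br r e]brC [br r f]brC Her Hfr oppr0 !scaler0 subr0 addr0.
have A4 : forall b, b \in P' -> br x1 b \in <[z]>%VS.
  move=> b Hb; move: (Hb); rewrite memP' => /and3P [HbP /eqP Heb /eqP Hfb].
  by rewrite /x1 brDl brBl !brZl Heb Hfb !scaler0 subr0 addr0; apply: Hx.
have [s [x'' [Hx'' /andP [HsP' Hodd] Hxs Hpat /andP [Hfree Hspan]]]] := IH P' x1 HdP' A1 A2 A3 A4.
have sP' i : (i < size s)%N -> nth 0 s i \in P'.
  by move=> Hi; apply: (allP HsP'); apply: mem_nth.
have sE i : (i < size s)%N -> br e (nth 0 s i) = 0.
  by move=> /sP'; rewrite memP' => /and3P [_ /eqP -> _].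
have sF i : (i < size s)%N -> br f (nth 0 s i) = 0.
  by move=> /sP'; rewrite memP' => /and3P [_ _ /eqP ->].
set p' := x'' - x1.
have Hx''E : x'' = p' + x1 by rewrite /p' subrK.
move: (Hx''); rewrite memP' => /and3P [_ /eqP Hep' /eqP Hfp'].
have SP' : (<<s ++ [:: z]>> <= P')%VS.
  apply/span_subvP => v; rewrite mem_cat inE => /orP [/(allP HsP') // | /eqP ->].
  exact: A1.
exists [:: e, f & s], x''; split.
- have -> : x'' - x = (x'' - x1) + (x1 - x) by rewrite addrA subrK.
  apply: memvD; first exact: (subvP P'P).
  rewrite /x1 addrC addrA addKr.
  by apply: memvD; rewrite ?memvN memvZ.
- rewrite /= He Hf /= !negbK Hodd andbT.
  by apply/allP => v Hv; apply: (subvP P'P); exact: (allP HsP' v Hv).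
- move=> [|[|j]] Hj /=.
  + by rewrite Hx''E brDl Hx1 addr0 brC Hep' oppr0.
  + by rewrite Hx''E brDl Hx2 addr0 brC Hfp' oppr0.
  + exact: Hxs.
- move=> [|[|i]] [|[|j]] Hi Hj /=; rewrite /pat /=;
    first [ by rewrite brxx | by rewrite Hef | by rewrite Hfe
             | by rewrite sE //; case: (odd j) | by rewrite sF //; case: (odd j)
             | by rewrite brC sE // oppr0; case: (odd i)
             | by rewrite brC sF // oppr0; case: (odd i)
             | by rewrite Hpat // /pat /= !negbK ].
- apply/andP; split.
  + rewrite /= !free_cons Hfree andbT; apply/andP; split.
    * rewrite span_cons; apply/negP => /memv_addP [v1 /vlineP [a ->] [v2 Hv2 Hee]].
      move: (subvP SP' _ Hv2); rewrite memP' => /and3P [_ _ /eqP Hfv2].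
      move: Hfe; rewrite Hee brDr brZr brxx scaler0 add0r Hfv2 => /eqP.
      by rewrite eq_sym oppr_eq0 (negbTE Hz0).
    * apply/negP => /(subvP SP'); rewrite memP' Hef => /and3P [_ /eqP Hc _].
      by move: Hz0; rewrite Hc eqxx.
  + apply/subvP => b Hb; have [kk [mm Hpb]] := projP b Hb.
    have -> : b = (b - mm *: e + kk *: f) - kk *: f + mm *: e by rewrite addrK subrK.
    have Hsub : (<<s ++ [:: z]>> <= <<[:: e, f & s] ++ [:: z]>>)%VS.
      by apply: sub_span => v Hv; rewrite /= !inE Hv !orbT.
    apply: memvD; first apply: memvB.
    * exact: (subvP Hsub _ (subvP Hspan _ Hpb)).
    * by apply: memvZ; apply: memv_span; rewrite /= !inE eqxx orbT.
    * by apply: memvZ; apply: memv_span; rewrite /= !inE eqxx.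
Qed.
End Darboux.

Lemma mapiota (t : seq V) : [seq nth 0 t i.-1 | i <- iota 1 (size t)] = t.
Proof.
rewrite (iotaDl 1 0) -map_comp.
have E : (fun i => nth 0 t i.-1) \o (fun i => 1 + i)%N =1 nth 0 t by [].
by rewrite (eq_map E) map_nth_iota0 // take_size.
Qed.

Section Top.
Variables (u x2 z : V).
Hypotheses (Hu : u != 0) (Hzu : z \notin <[u]>%VS) (Hux2 : br u x2 = u)
  (Hzc : forall y, br y z = 0)
  (HS2 : forall a b, br a b \in (<[u]> + <[z]>)%VS)
  (HS3 : forall v, exists al, br v u = al *: u)
  (HS4 : forall c, (forall y, br c y = 0) -> c \in (<[u]> + <[z]>)%VS)
  (HS5 : z \in lcs br 1).

Lemma Hz0 : z != 0.
Proof. by apply: contraNneq Hzu => ->; rewrite mem0v. Qed.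
Lemma Huz : u \notin <[z]>%VS.
Proof.
apply/negP => /vlineP [k Hk].
have kn : k != 0 by apply: contraNneq Hu => k0; rewrite Hk k0 scale0r.
have Ez : z = k^-1 *: u by rewrite Hk scalerA mulVf // scale1r.
by move: Hzu; rewrite {1}Ez (memvZ _ (memv_line u)).
Qed.
Lemma Hzc' y : br z y = 0. Proof. by rewrite brC Hzc oppr0. Qed.
Lemma Hx2u : br x2 u = - u. Proof. by rewrite brC Hux2. Qed.
Lemma memUZ v : v \in (<[u]> + <[z]>)%VS -> exists p q, v = p *: u + q *: z.
Proof. by case/memv_addP => v1 /vlineP [p ->] [v2 /vlineP [q ->] ->]; exists p, q. Qed.
Lemma K1 v : v \in (<[u]> + <[z]>)%VS -> br x2 v \in <[z]>%VS -> v \in <[z]>%VS.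
Proof.
move=> /memUZ [p [q ->]]; rewrite brDr !brZr Hx2u Hzc scaler0 addr0 scalerN memvN.
have [-> | pn] := eqVneq p 0; first by rewrite scale0r add0r memvZ // memv_line.
move=> Hpu; have Eu : u = p^-1 *: (p *: u) by rewrite scalerA mulVf // scale1r.
by move: Huz; rewrite {1}Eu (memvZ _ Hpu).
Qed.
Lemma J2 a b : br x2 a \in <[z]>%VS -> br x2 b \in <[z]>%VS -> br a b \in <[z]>%VS.
Proof.
move=> /vlineP [ka Ha] /vlineP [kb Hb]; apply: K1 => //.
have J := jacobi x2 a b.
rewrite [br b x2]brC Hb Ha brNr !brZr !Hzc !scaler0 oppr0 !addr0 in J.
by rewrite J mem0v.
Qed.

Definition PP : {vspace V} := (lker (adL u) :&: (adL x2 @^-1: <[z]>))%VS.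
Lemma memP v : (v \in PP) = (br u v == 0) && (br x2 v \in <[z]>%VS).
Proof. by rewrite memv_cap memv_ker -memv_preim !adLE. Qed.
Lemma PinZ : z \in PP.
Proof. by rewrite memP !Hzc eqxx mem0v. Qed.
Lemma HPP a b : a \in PP -> b \in PP -> br a b \in <[z]>%VS.
Proof. by rewrite !memP => /andP [_ Ha] /andP [_ Hb]; apply: J2. Qed.
Lemma decomp v : exists2 q, q \in PP & exists a b, v = q + a *: u + b *: x2.
Proof.
have [al Hal] := HS3 v.
have H1 : br u (v + al *: x2) = 0 by rewrite brDr brZr Hux2 [br u v]brC Hal addNr.
have [p [q Hpq]] := memUZ (HS2 x2 (v + al *: x2)).
exists (v + al *: x2 + p *: u).
  rewrite memP brDr brZr brxx scaler0 addr0 H1 eqxx /=.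
  by rewrite brDr Hpq brZr Hx2u scalerN addrAC subrr add0r memvZ // memv_line.
by exists (- p), (- al); rewrite !scaleNr addrK addrK.
Qed.
Lemma central r : r \in PP -> br x2 r = 0 -> (forall b, b \in PP -> br r b = 0) -> r \in <[z]>%VS.
Proof.
move=> HrP Hx2r Hrad; apply: K1; last by rewrite Hx2r mem0v.
apply: HS4 => y; have [q Hq [a [b ->]]] := decomp y.
move: HrP; rewrite memP => /andP [/eqP Hur _].
by rewrite !brDr !brZr Hrad // [br r u]brC Hur [br r x2]brC Hx2r oppr0 !scaler0 !addr0.
Qed.

Lemma freeTop x2' X : x2' - x2 \in PP -> {subset X <= PP} -> free X ->
  free (u :: x2' :: X).
Proof.
move=> Hp HX HfX.
have E : x2' = x2 + (x2' - x2) by rewrite addrC subrK.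
have SX : (<<X>> <= PP)%VS by apply/span_subvP.
have Hux : br u x2' = u.
  move: (Hp); rewrite memP => /andP [/eqP H _].
  by rewrite E brDr Hux2 H addr0.
rewrite !free_cons HfX andbT; apply/andP; split.
- rewrite span_cons; apply/negP => /memv_addP [v1 /vlineP [a ->] [w Hw Heq]].
  have Hw' := subvP SX _ Hw.
  have : br x2' u \in <[z]>%VS.
    rewrite Heq brDr brZr brxx scaler0 add0r E brDl memvD //.
      by move: Hw'; rewrite memP => /andP [].
    by apply: HPP.
  by rewrite brC Hux memvN (negbTE Huz).
- apply/negP => /(subvP SX); rewrite memP Hux => /andP [Hu0 _].
  by move: Hu; rewrite Hu0.
Qed.

Lemma spanTop x2' X : x2' - x2 \in PP -> (PP <= <<X>>)%VS ->
  <<u :: x2' :: X>>%VS = fullv.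
Proof.
move=> Hp HX; apply/subv_anti/andP; split; first exact: subvf.
apply/subvP => v _; have [q Hq [a [b ->]]] := decomp v.
have Hsub : (<<X>> <= <<u :: x2' :: X>>)%VS.
  by apply: sub_span => w Hw; rewrite !inE Hw !orbT.
have Hx2 : x2 = x2' - (x2' - x2) by rewrite opprB addrC subrK.
rewrite Hx2; apply: memvD; first apply: memvD.
- exact: (subvP Hsub _ (subvP HX _ Hq)).
- by apply: memvZ; apply: memv_span; rewrite !inE eqxx.
- apply: memvZ; apply: memvB; first by apply: memv_span; rewrite !inE eqxx orbT.
  exact: (subvP Hsub _ (subvP HX _ Hp)).
Qed.

Lemma top_main :
  exists (n : nat) (x1 x2 z : V) (zs : nat -> V),
    (0 < n)%N /\
    basis_of fullv ([:: x1; x2] ++ [seq zs i | i <- iota 1 n] ++ [:: z]) /\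
    (
      (~~ odd n /\
       br x1 x2 = x1 /\ br x1 z = 0 /\ br x2 z = 0 /\
       (forall i, (1 <= i <= n)%N ->
          [/\ br x1 (zs i) = 0, br x2 (zs i) = 0 & br (zs i) z = 0]) /\
       (forall i j, (1 <= i <= n)%N -> (1 <= j <= n)%N ->
          br (zs i) (zs j) =
            if odd i && (j == i.+1) then z
            else if odd j && (i == j.+1) then - z else 0))
    \/
      (odd n /\
       br x1 x2 = x1 /\ br x1 z = 0 /\ br x2 z = 0 /\
       br x2 (zs 1%N) = z /\
       (forall i, (1 <= i <= n)%N -> [/\ br x1 (zs i) = 0 & br (zs i) z = 0]) /\
       (forall i, (2 <= i <= n)%N -> br x2 (zs i) = 0) /\
       (forall i j, (1 <= i <= n)%N -> (1 <= j <= n)%N ->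
          br (zs i) (zs j) =
            if ~~ odd i && (j == i.+1) then z
            else if ~~ odd j && (i == j.+1) then - z else 0))).
Proof.
have Hz0 := Hz0.
have Hzc' := Hzc'.
case: (classic (exists r, [/\ r \in PP, (forall b, b \in PP -> br r b = 0) & r \notin <[z]>%VS]))
  => [[r [HrP Hrad Hrz]] | Hno].
-
  have [c Hc] : exists c, br x2 r = c *: z.
    by apply/vlineP; move: HrP; rewrite memP => /andP [].
  have cn : c != 0.
    apply: contra Hrz => /eqP c0; apply: central => //.
    by rewrite Hc c0 scale0r.
  set z1 := c^-1 *: r.
  have Hz1P : z1 \in PP by rewrite memvZ.
  have Hz1rad b : b \in PP -> br z1 b = 0 by move=> Hb; rewrite brZl Hrad // scaler0.
  have Hx2z1 : br x2 z1 = z by rewrite brZr Hc scalerA mulVf // scale1r.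
  clearbody z1.
  set P' := (PP :&: lker (adL x2))%VS.
  have memP' v : (v \in P') = (v \in PP) && (br x2 v == 0).
    by rewrite memv_cap memv_ker adLE.
  have P'P : (P' <= PP)%VS by apply/subvP => v; rewrite memP' => /andP [].
  have projz b : b \in PP -> exists cb, b - cb *: z1 \in P'.
    move=> Hb; have [cb Hcb] : exists cb, br x2 b = cb *: z.
      by apply/vlineP; move: Hb; rewrite memP => /andP [].
    by exists cb; rewrite memP' memvB ?memvZ //= brBr brZr Hx2z1 Hcb subrr eqxx.
  have A1 : z \in P' by rewrite memP' PinZ Hzc eqxx.
  have A2 : forall a b, a \in P' -> b \in P' -> br a b \in <[z]>%VS.
    by move=> a b Ha Hb; apply: HPP; apply: (subvP P'P).
  have A3 : forall r', r' \in P' -> (forall b, b \in P' -> br r' b = 0) -> r' \in <[z]>%VS.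
    move=> r' Hr' Hr0; move: (Hr'); rewrite memP' => /andP [Hr'P /eqP Hx2r'].
    apply: central => // b Hb; have [cb Hcb] := projz b Hb.
    have -> : b = (b - cb *: z1) + cb *: z1 by rewrite subrK.
    by rewrite brDr brZr Hr0 // brC Hz1rad // oppr0 scaler0 addr0.
  have A4 : forall b, b \in P' -> br x2 b \in <[z]>%VS.
    by move=> b; rewrite memP' => /andP [_ /eqP ->]; rewrite mem0v.
  have [s [x2' [Hx2' /andP [HsP' Hodd] Hxs Hpat /andP [Hfree Hspan]]]] :=
    darboux Hz0 Hzc (leqnn (\dim P')) A1 A2 A3 A4.
  have Hp : x2' - x2 \in PP := subvP P'P _ Hx2'.
  have sP' i : (i < size s)%N -> nth 0 s i \in P'.
    by move=> Hi; apply: (allP HsP'); apply: mem_nth.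
  have sP i : (i < size s)%N -> nth 0 s i \in PP by move/sP'; apply: (subvP P'P).
  have SP' : (<<s ++ [:: z]>> <= P')%VS.
    apply/span_subvP => v; rewrite mem_cat inE => /orP [/(allP HsP') // | /eqP ->].
    exact: A1.
  have E : x2' = x2 + (x2' - x2) by rewrite addrC subrK.
  have Hux : br u x2' = u.
    move: (Hp); rewrite memP => /andP [/eqP H _].
    by rewrite E brDr Hux2 H addr0.
  exists (size s).+1, u, x2', z, (fun i => nth 0 (z1 :: s) i.-1).
  split; first by [].
  split.
    have -> : [seq nth 0 (z1 :: s) i.-1 | i <- iota 1 (size s).+1] = z1 :: s.
      exact: (mapiota (z1 :: s)).
    rewrite /basis_of /=; apply/andP; split.
      rewrite (spanTop Hp) //.
      apply/subvP => b Hb; have [cb Hcb] := projz b Hb.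
      have -> : b = (b - cb *: z1) + cb *: z1 by rewrite subrK.
      apply: memvD.
        have Hsub : (<<s ++ [:: z]>> <= <<z1 :: s ++ [:: z]>>)%VS.
          by apply: sub_span => w Hw; rewrite inE Hw orbT.
        exact: (subvP Hsub _ (subvP Hspan _ Hcb)).
      by apply: memvZ; apply: memv_span; rewrite inE eqxx.
    apply: freeTop => //.
      move=> v; rewrite inE => /orP [/eqP -> // | ].
      rewrite mem_cat inE => /orP [/(allP HsP') /(subvP P'P) // | /eqP ->].
      exact: PinZ.
    rewrite free_cons Hfree andbT; apply/negP => /(subvP SP').
    by rewrite memP' Hx2z1 (negbTE Hz0) andbF.
  right; split; first by rewrite /= Hodd.
  split; first exact: Hux.
  split; first exact: Hzc.
  split; first exact: Hzc.
  split.
    by rewrite /= E brDl Hx2z1 brC Hz1rad // oppr0 addr0.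
  have zsP i : (1 <= i <= (size s).+1)%N -> nth 0 (z1 :: s) i.-1 \in PP.
    by case: i => [//|[|i]] //= Hi; apply: sP.
  split.
    move=> i Hi; have := zsP i Hi; rewrite memP => /andP [/eqP H _]; split => //.
  split.
    by move=> [|[|i]] //= Hi; apply: Hxs.
  move=> [|[|i]] [|[|j]] //= Hi Hj.
  + by rewrite brxx.
  + by rewrite Hz1rad ?sP //; case: (odd j).
  + by rewrite brC Hz1rad ?sP // oppr0; case: (odd i).
  + by rewrite Hpat // /pat /= !negbK.
-
  have Hnd : forall r, r \in PP -> (forall b, b \in PP -> br r b = 0) -> r \in <[z]>%VS.
    by move=> r HrP Hrad; apply/negPn/negP => Hrz; apply: Hno; exists r; split.
  have A4 : forall b, b \in PP -> br x2 b \in <[z]>%VS.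
    by move=> b; rewrite memP => /andP [].
  have [s [x2' [Hx2' /andP [HsP Hodd] Hxs Hpat /andP [Hfree Hspan]]]] :=
    darboux Hz0 Hzc (leqnn (\dim PP)) PinZ HPP Hnd A4.
  have sP i : (i < size s)%N -> nth 0 s i \in PP.
    by move=> Hi; apply: (allP HsP); apply: mem_nth.
  have E : x2' = x2 + (x2' - x2) by rewrite addrC subrK.
  have Hux : br u x2' = u.
    move: (Hx2'); rewrite memP => /andP [/eqP H _].
    by rewrite E brDr Hux2 H addr0.
  have Hs0 : (0 < size s)%N.
    rewrite lt0n size_eq0; apply/negP => /eqP Hs; move: Hspan; rewrite Hs /= span_seq1 => HPz.
    have Hmem v : v \in <<[:: u; x2; z]>>%VS.
      have [q Hq [a [b ->]]] := decomp v.
      have /vlineP [k ->] := subvP HPz _ Hq.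
      by rewrite !memvD // memvZ // memv_span // !inE eqxx ?orbT.
    have : (lcs br 1 <= <[u]>)%VS.
      apply: lbr_sub => a b _ _; apply: (br_span _ (Hmem a) (Hmem b)).
      move=> x y; rewrite !inE => /or3P [] /eqP -> /or3P [] /eqP ->;
        rewrite ?brxx ?Hux2 ?Hx2u ?Hzc ?Hzc' ?mem0v ?memvN ?memv_line //.
    by move/subvP/(_ _ HS5); rewrite (negbTE Hzu).
  exists (size s), u, x2', z, (fun i => nth 0 s i.-1).
  split; first exact: Hs0.
  split.
    rewrite mapiota /basis_of /=; apply/andP; split.
      by rewrite (spanTop Hx2').
    apply: freeTop => //.
    move=> v; rewrite mem_cat inE => /orP [/(allP HsP) // | /eqP ->].
    exact: PinZ.
  left; split; first exact: Hodd.
  split; first exact: Hux.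
  split; first exact: Hzc.
  split; first exact: Hzc.
  split.
    move=> [|i] // /andP [_ Hi] /=; have := sP i Hi; rewrite memP => /andP [/eqP H _].
    by split => //; apply: Hxs.
  move=> [|i] [|j] // /andP [_ Hi] /andP [_ Hj] /=.
  by rewrite Hpat // /pat.
Qed.

End Top.

End Lie.

Theorem theorem3p4 (R : realType) (V : vectType R[i]) (br : V -> V -> V) :
  is_lie_bracket br ->
  lie_pure br -> ~ lie_nilpotent br -> lie_solvable br ->
  lie_breadth_eq br 2 ->
  \dim (lcs br 1) = 2%N ->
  (forall k, (2 <= k)%N -> \dim (lcs br k) = 1%N) ->
  exists (n : nat) (x1 x2 z : V) (zs : nat -> V),
    (0 < n)%N /\
    basis_of fullv ([:: x1; x2] ++ [seq zs i | i <- iota 1 n] ++ [:: z]) /\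
    ( (* case (1) *)
      (~~ odd n /\
       br x1 x2 = x1 /\ br x1 z = 0 /\ br x2 z = 0 /\
       (forall i, (1 <= i <= n)%N ->
          [/\ br x1 (zs i) = 0, br x2 (zs i) = 0 & br (zs i) z = 0]) /\
       (forall i j, (1 <= i <= n)%N -> (1 <= j <= n)%N ->
          br (zs i) (zs j) =
            if odd i && (j == i.+1) then z
            else if odd j && (i == j.+1) then - z else 0))
    \/
      (* case (2) *)
      (odd n /\
       br x1 x2 = x1 /\ br x1 z = 0 /\ br x2 z = 0 /\
       br x2 (zs 1%N) = z /\
       (forall i, (1 <= i <= n)%N -> [/\ br x1 (zs i) = 0 & br (zs i) z = 0]) /\
       (forall i, (2 <= i <= n)%N -> br x2 (zs i) = 0) /\
       (forall i j, (1 <= i <= n)%N -> (1 <= j <= n)%N ->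
          br (zs i) (zs j) =
            if ~~ odd i && (j == i.+1) then z
            else if ~~ odd j && (i == j.+1) then - z else 0))).

Proof.
move=> Hbr Hpure _ _ _ H1 Hk.
have [u [x2 [z [Hu Hzu Hux2 Hzc [HS2 HS3 HS4 HS5]]]]] :=
  structure Hbr Hpure H1 (Hk 2%N isT) (Hk 3%N isT).
exact: (top_main Hbr Hu Hzu Hux2 Hzc HS2 HS3 HS4 HS5).
Qed.
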